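(* Let $\mathcal{N}_{A\to B}$ be a quantum channel between finite-dimensional systems, let $\varepsilon\in[0,1]$ and let $k\ge1$ be an integer. Then $$C^{\varepsilon}(\mathcal{N}_{A\to B})\le -\log_2\inf\lambda,$$ where the infimum is over $\lambda\ge0$, quantum states $\rho_A$, and operators $\{Q^{y_1^k}_{AB_1^k}\}_{y_1^k\in\{0,1\}^k}$ on $A B_1\cdots B_k$ (each $B_i\cong B$) subject to: (1) $\sum_{y_1^k\in\{0,1\}^k}Q^{y_1^k}_{AB_1^k}=\rho_A\otimes I_{B_1^k}$; (2) $Q^{y_1^k}_{AB_1^k}\ge0$ for all $y_1^k$; (3) $W^\pi_{B_1^k}Q^{(y_{\pi(1)},\dots,y_{\pi(k)})}_{AB_1^k}(W^\pi_{B_1^k})^\dagger=Q^{y_1^k}_{AB_1^k}$ for all $\pi\in S_k$ and all $y_1^k$; (4) $T_{B_1^i}(Q^{y_1^k}_{AB_1^k})\ge0$ for all $i\in[k]$ and all $y_1^k$; (5) $\sum_{y_2^k}\operatorname{Tr}_A[Q^{(0,y_2,\dots,y_k)}_{AB_1^k}]\le\lambda I_{B_1^k}$; (6) $\sum_{y_k}\operatorname{Tr}_A[Q^{y_1^k}_{AB_1^k}]=\frac{1}{|B|}\sum_{y_k}\operatorname{Tr}_{AB_k}[Q^{y_1^k}_{AB_1^k}]\otimes I_{B_k}$ for all $y_1^{k-1}\in\{0,1\}^{k-1}$; (7) $\frac{1}{|B|^{k-1}}\sum_{y_2^k}\operatorname{Tr}\big[Q^{(0,y_2,\dots,y_k)}_{AB_1^k}(\Gamma^{\mathcal{N}}_{AB_1}\otimes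 I_{B_2^k})\big]\ge1-\varepsilon$.
   Context: Notation: $y_i^j=(y_i,\dots,y_j)$, $B_i^j=B_i\cdots B_j$; $W^\pi_{B_1^k}$ is the unitary permuting systems $B_1,\dots,B_k$ according to $\pi\in S_k$; $T_{B_1^i}$ denotes the partial transpose (in the standard basis) on systems $B_1,\dots,B_i$. The Choi operator is $\Gamma^{\mathcal{N}}_{AB}=\sum_{i,j=0}^{|A|-1}|i\rangle\!\langle j|_A\otimes\mathcal{N}(|i\rangle\!\langle j|)_B$ (with the reference system identified with $A$). One-shot classical capacity: for a finite message set $\mathcal{X}$, an encoding classical-quantum channel $\mathcal{E}_{X\to A}$ (i.e., states $\rho^x_A=\mathcal{E}(|x\rangle\!\langle x|)$) and a decoding POVM $\{\Lambda^{\hat x}_B\}_{\hat x\in\mathcal{X}}$, the maximal error probability is $p_{\rm err}=\max_{x\in\mathcal{X}}\sum_{\hat x\ne x}\operatorname{Tr}[\Lambda^{\hat x}_B\mathcal{N}(\rho^x_A)]$, and $C^\varepsilon(\mathcal{N})=\sup\{\log_2|\mathcal{X}|: p_{\rm err}\le\varepsilon\}$ over all $\mathcal{X},\mathcal{E},\{\Lambda^{\hat x}\}$. *)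

(* Defs.v *)
From HB Require Import structures.
From mathcomp Require Import all_boot all_order all_algebra.
From mathcomp Require Import all_classical all_reals.
From mathcomp Require Import fingroup perm.
From mathcomp Require Import ereal exp.
From mathcomp Require Import complex.
Import Order.TTheory GRing.Theory Num.Theory.

Set Implicit Arguments.
Unset Strict Implicit.
Unset Printing Implicit Defensive.

Local Open Scope ring_scope.

Section QuantumDefs.
Variable R : realType.

Definition rC (x : R) : R[i] := (x%:C)%C.

(** Linear operators on the finite-dimensional Hilbert space C^I, written as
    their matrix in the standard (computational) basis indexed by the finType I.
    Composite systems are indexed by products / finite function types. *)
Definition op (I : finType) := I -> I -> R[i].

Definition opI {I : finType} : op I := fun i j => (i == j)%:R.
Definition opmul {I : finType} (X Y : op I) : op I :=
  fun i j => \sum_(l : I) X i l * Y l j.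
Definition opadj {I : finType} (X : op I) : op I := fun i j => (X j i)^*.
Definition optr {I : finType} (X : op I) : R[i] := \sum_(i : I) X i i.

(** Positive semidefiniteness (Loewner order X >= 0): <v, X v> >= 0 for all v
    (in the partial order of C, i.e. real and nonnegative). *)
Definition psd {I : finType} (X : op I) : Prop :=
  forall v : I -> R[i], 0 <= \sum_(i : I) \sum_(j : I) (v i)^* * X i j * v j.
Definition ople {I : finType} (X Y : op I) : Prop := psd (fun i j => Y i j - X i j).

Definition is_state {I : finType} (rho : op I) : Prop := psd rho /\ optr rho = 1.

Definition chan (dA dB : nat) := op 'I_dA -> op 'I_dB.

Definition is_linear_map (dA dB : nat) (N : chan dA dB) : Prop :=
  forall (c : R[i]) (X Y : op 'I_dA),
    N (fun i j => c * X i j + Y i j) = (fun i j => c * N X i j + N Y i j).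

Definition trace_preserving (dA dB : nat) (N : chan dA dB) : Prop :=
  forall X : op 'I_dA, optr (N X) = optr X.

Definition completely_positive (dA dB : nat) (N : chan dA dB) : Prop :=
  forall (n : nat) (X : op ('I_n * 'I_dA)%type), psd X ->
    psd (fun (p q : 'I_n * 'I_dB) =>
           N (fun a a' => X (p.1, a) (q.1, a')) p.2 q.2).

Definition is_channel (dA dB : nat) (N : chan dA dB) : Prop :=
  [/\ is_linear_map N, trace_preserving N & completely_positive N].

(** Choi operator: Gamma = sum_{i,j} |i><j|_A (x) N(|i><j|)_B. *)
Definition choi (dA dB : nat) (N : chan dA dB) : op ('I_dA * 'I_dB)%type :=
  fun p q => N (fun i j => ((i == p.1) && (j == q.1))%:R) p.2 q.2.

Definition log2 (x : R) : R := ln x / ln 2.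

Definition elog2 (x : \bar R) : \bar R :=
  match x with
  | EFin r => if 0 < r then (log2 r)%:E else -oo%E
  | +oo%E => +oo%E
  | -oo%E => -oo%E
  end.

Definition is_povm (dB M : nat) (Lam : 'I_M -> op 'I_dB) : Prop :=
  (forall x, psd (Lam x)) /\
  (forall b b' : 'I_dB, \sum_(x : 'I_M) Lam x b b' = opI b b').

Definition perr (dA dB M : nat) (N : chan dA dB)
    (rho : 'I_M -> op 'I_dA) (Lam : 'I_M -> op 'I_dB) : R :=
  \big[Num.max/0]_(x : 'I_M)
     complex.Re (\sum_(xh : 'I_M | xh != x) optr (opmul (Lam xh) (N (rho x)))).

(** C^eps(N) = sup { log2 |X| : codes with p_err <= eps }, message sets nonempty
    finite (w.l.o.g. X = 'I_M); an encoding cq-channel is a family of states. *)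
Definition one_shot_capacity (dA dB : nat) (N : chan dA dB) (eps : R) : \bar R :=
  ereal_sup [set e : \bar R | exists (M : nat) (rho : 'I_M -> op 'I_dA)
                                     (Lam : 'I_M -> op 'I_dB),
      [/\ (0 < M)%N, (forall x, is_state (rho x)), is_povm Lam,
          perr N rho Lam <= eps & e = (log2 M%:R)%:E]].

(** Index type of B_1 ... B_k (each B_i = 'I_dB), and of y_1^k in {0,1}^k
    (0 = false, 1 = true).  Coordinate j : 'I_k stands for system B_{j+1}. *)
Definition Bk (k dB : nat) := {ffun 'I_k -> 'I_dB}.
Definition Yk (k : nat) := {ffun 'I_k -> bool}.

(** Permutation unitary W^pi on B_1^k (tensored with I_A):
    W^pi X (W^pi)^dagger has entries X(b o pi, b' o pi). *)
Definition Wperm (k dB : nat) (pi : {perm 'I_k}) : op (Bk k dB) :=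
  fun b b' => (b' == [ffun j => b (pi j)])%:R.
Definition WpermA (dA k dB : nat) (pi : {perm 'I_k}) : op ('I_dA * Bk k dB)%type :=
  fun p q => (p.1 == q.1)%:R * Wperm pi p.2 q.2.

Definition permy (k : nat) (pi : {perm 'I_k}) (y : Yk k) : Yk k :=
  [ffun j => y (pi j)].

(** Partial transpose on B_1 ... B_i (coordinates j with j < i). *)
Definition ptrans (dA k dB : nat) (i : nat) (X : op ('I_dA * Bk k dB)%type)
  : op ('I_dA * Bk k dB)%type :=
  fun p q =>
    X (p.1, [ffun j : 'I_k => if (j < i)%N then q.2 j else p.2 j])
      (q.1, [ffun j : 'I_k => if (j < i)%N then p.2 j else q.2 j]).

Definition trA (dA k dB : nat) (X : op ('I_dA * Bk k dB)%type) : op (Bk k dB) :=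
  fun b b' => \sum_(a : 'I_dA) X (a, b) (a, b').

Definition first0 (k : nat) (y : Yk k) : bool :=
  [forall j : 'I_k, (val j == 0)%N ==> ~~ y j].

Definition agree_but_last (k : nat) (y y' : Yk k) : bool :=
  [forall j : 'I_k, (val j != k.-1) ==> (y j == y' j)].

Definition setlast (k dB : nat) (b : Bk k dB) (c : 'I_dB) : Bk k dB :=
  [ffun j : 'I_k => if val j == k.-1 then c else b j].

(** b and b' agree on the B_k coordinate ("delta" of I_{B_k}) *)
Definition eqlast (k dB : nat) (b b' : Bk k dB) : bool :=
  [forall j : 'I_k, (val j == k.-1) ==> (b j == b' j)].

(** b and b' agree on B_2 ... B_k ("delta" of I_{B_2^k}) *)
Definition eqtail (k dB : nat) (b b' : Bk k dB) : bool :=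
  [forall j : 'I_k, (val j != 0)%N ==> (b j == b' j)].

(** Gamma^N_{A B_1} (x) I_{B_2^k}; the sum over j ranges over the single
    index j = 0 (system B_1) when k >= 1. *)
Definition choi_ext (dA dB k : nat) (N : chan dA dB) : op ('I_dA * Bk k dB)%type :=
  fun p q =>
    (\sum_(j : 'I_k | val j == 0%N) choi N (p.1, p.2 j) (q.1, q.2 j))
      * (eqtail p.2 q.2)%:R.

Definition sdp_feasible (dA dB : nat) (N : chan dA dB) (eps : R) (k : nat)
    (lam : R) (rho : op 'I_dA) (Q : Yk k -> op ('I_dA * Bk k dB)%type) : Prop :=
  (
   (forall p q : 'I_dA * Bk k dB,
       \sum_(y : Yk k) Q y p q = rho p.1 q.1 * (p.2 == q.2)%:R) /\
   (forall y, psd (Q y)) /\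
   (forall (pi : {perm 'I_k}) (y : Yk k),
       opmul (opmul (@WpermA dA k dB pi) (Q (permy pi y))) (opadj (@WpermA dA k dB pi)) = Q y) /\
   (forall (i : nat) (y : Yk k), (1 <= i <= k)%N -> psd (ptrans i (Q y))) /\
   ople (fun b b' => \sum_(y : Yk k | first0 y) trA (Q y) b b')
        (fun b b' => rC lam * opI b b') /\
   (forall (y : Yk k) (b b' : Bk k dB),
       \sum_(y' : Yk k | agree_but_last y y') trA (Q y') b b' =
       (dB%:R)^-1 *
         (\sum_(y' : Yk k | agree_but_last y y')
            \sum_(a : 'I_dA) \sum_(c : 'I_dB)
               Q y' (a, setlast b c) (a, setlast b' c))
         * (eqlast b b')%:R) /\
   rC (1 - eps) <=
     ((dB%:R) ^+ (k.-1))^-1 *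
       \sum_(y : Yk k | first0 y) optr (opmul (Q y) (@choi_ext dA dB k N))).

Definition sdp_inf (dA dB : nat) (N : chan dA dB) (eps : R) (k : nat) : \bar R :=
  ereal_inf [set e : \bar R | exists (lam : R) (rho : op 'I_dA)
                                     (Q : Yk k -> op ('I_dA * Bk k dB)%type),
      [/\ 0 <= lam, is_state rho, sdp_feasible N eps lam rho Q & e = lam%:E]].

End QuantumDefs.

(* Main.v *)
Require Import Defs.
From HB Require Import structures.
From mathcomp Require Import all_boot all_order all_algebra.
From mathcomp Require Import all_classical all_reals.
From mathcomp Require Import fingroup perm.
From mathcomp Require Import ereal exp.
From mathcomp Require Import complex.
From mathcomp Require Import ring lra.
Import Order.TTheory GRing.Theory Num.Theory.

Local Open Scope ring_scope.

Section Psd.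
Variable R : realType.
Local Notation C := (R[i]).

Definition sf {I : finType} (Y : op R I) (u v : I -> C) : C :=
  \sum_i \sum_j (u i)^* * Y i j * v j.

Definition ev {I : finType} (i0 : I) : I -> C := fun i => (i == i0)%:R.

Lemma psdE {I : finType} (Y : op R I) : psd Y <-> forall v, 0 <= sf Y v v.
Proof. by []. Qed.

Lemma sf_addl {I : finType} (Y : op R I) u1 u2 v :
  sf Y (fun i => u1 i + u2 i) v = sf Y u1 v + sf Y u2 v.
Proof.
rewrite /sf -big_split /=; apply: eq_bigr => i _.
rewrite -big_split /=; apply: eq_bigr => j _.
by rewrite rmorphD /= !mulrDl.
Qed.

Lemma sf_addr {I : finType} (Y : op R I) u v1 v2 :
  sf Y u (fun i => v1 i + v2 i) = sf Y u v1 + sf Y u v2.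
Proof.
rewrite /sf -big_split /=; apply: eq_bigr => i _.
rewrite -big_split /=; apply: eq_bigr => j _.
by rewrite mulrDr.
Qed.

Lemma sf_scalel {I : finType} (Y : op R I) c u v :
  sf Y (fun i => c * u i) v = c^* * sf Y u v.
Proof.
rewrite /sf mulr_sumr; apply: eq_bigr => i _.
rewrite mulr_sumr; apply: eq_bigr => j _.
by rewrite rmorphM /= !mulrA.
Qed.

Lemma sf_scaler {I : finType} (Y : op R I) c u v :
  sf Y u (fun i => c * v i) = c * sf Y u v.
Proof.
rewrite /sf mulr_sumr; apply: eq_bigr => i _.
rewrite mulr_sumr; apply: eq_bigr => j _.
by rewrite mulrCA.
Qed.

Lemma sum_evl {I : finType} (i0 : I) (f : I -> C) :
  \sum_i (i == i0)%:R * f i = f i0.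
Proof.
rewrite (bigD1 i0) //= eqxx mul1r big1 ?addr0 // => i /negbTE ->.
by rewrite mul0r.
Qed.

Lemma sum_evr {I : finType} (i0 : I) (f : I -> C) :
  \sum_i f i * (i == i0)%:R = f i0.
Proof. by rewrite -[RHS](sum_evl i0); apply: eq_bigr => i _; rewrite mulrC. Qed.

Lemma sf_el {I : finType} (Y : op R I) i0 v :
  sf Y (ev i0) v = \sum_j Y i0 j * v j.
Proof.
rewrite /sf /ev (exchange_big) /=.
transitivity (\sum_j (\sum_i (i == i0)%:R * (Y i j * v j))).
  apply: eq_bigr => j _; apply: eq_bigr => i _.
  by rewrite rmorph_nat mulrA.
by apply: eq_bigr => j _; rewrite sum_evl.
Qed.

Lemma sf_er {I : finType} (Y : op R I) u j0 :
  sf Y u (ev j0) = \sum_i (u i)^* * Y i j0.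
Proof.
rewrite /sf /ev; apply: eq_bigr => i _.
by rewrite (eq_bigr (fun j => ((u i)^* * Y i j) * (j == j0)%:R)) // sum_evr.
Qed.

Lemma sf_ee {I : finType} (Y : op R I) i j : sf Y (ev i) (ev j) = Y i j.
Proof.
rewrite sf_el /ev sum_evr //.
Qed.

Lemma qf_expand {I : finType} (Y : op R I) v t i0 :
  sf Y (fun i => v i + t * ev i0 i) (fun i => v i + t * ev i0 i) =
  sf Y v v + t * sf Y v (ev i0) + t^* * sf Y (ev i0) v + t^* * t * Y i0 i0.
Proof.
rewrite sf_addl !sf_addr !sf_scalel !sf_scaler sf_ee.
ring.
Qed.


Lemma psd_diag {I : finType} (Y : op R I) i : psd Y -> 0 <= Y i i.
Proof. by move=> /(_ (ev i)); rewrite -/(sf Y _ _) sf_ee. Qed.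

Lemma psd_real {I : finType} (Y : op R I) v : psd Y -> sf Y v v \is Num.real.
Proof. by move=> /(_ v) /ger0_real. Qed.

Lemma psd_herm {I : finType} (Y : op R I) i j : psd Y -> Y j i = (Y i j)^*.
Proof.
move=> pY.
have [->|nij] := eqVneq i j.
  by rewrite conj_Creal // ger0_real // psd_diag.
have P t : t * Y j i + t^* * Y i j \is Num.real.
  have := psd_real Y (fun k => ev j k + t * ev i k) pY.
  rewrite qf_expand sf_ee sf_el sf_er /ev.
  rewrite sum_evr.
  rewrite (eq_bigr (fun k => (k == i)%:R * Y k j)); last first.
    by move=> k _; rewrite rmorph_nat.
  rewrite sum_evl => H.
  have -> : t * Y j i + t^* * Y i j =
     (Y j j + t * Y j i + t^* * Y i j + t^* * t * Y i i) - Y j j - t^* * t * Y i i by ring.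
  rewrite rpredB // ?rpredB // ?ger0_real ?psd_diag //.
  by rewrite mulr_ge0 ?psd_diag // mulrC mul_conjC_ge0.
set a := Y j i; set b := Y i j.
have E1 : a + b = a^* + b^*.
  by have := P 1; rewrite rmorph1 !mul1r => /conj_Creal; rewrite rmorphD.
have E2 : - a + b = a^* - b^*.
  have := P 'i; rewrite conjCi => /conj_Creal; rewrite rmorphD !rmorphM /= conjCi.
  rewrite rmorphN /= conjCi opprK => E.
  have := congr1 (fun z => 'i * z) E.
  have Hi : 'i * 'i = -1 :> C by rewrite -expr2 sqrCi.
  have -> : 'i * ('i * a + - 'i * b) = ('i * 'i) * a - ('i * 'i) * b by ring.
  have -> : 'i * (- 'i * a^* + 'i * b^*) = - ('i * 'i) * a^* + ('i * 'i) * b^* by ring.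
  rewrite Hi => E'; transitivity (-1 * a - -1 * b); first ring.
  by rewrite -E'; ring.
apply: (mulfI (x := 2)); first by rewrite pnatr_eq0.
transitivity ((a + b) - (- a + b)); first by ring.
by rewrite E1 E2; ring.
Qed.


Lemma sf_conj {I : finType} (Y : op R I) u v : psd Y -> sf Y u v = (sf Y v u)^*.
Proof.
move=> pY; rewrite /sf rmorph_sum exchange_big /=; apply: eq_bigr => j _.
rewrite rmorph_sum; apply: eq_bigr => i _.
rewrite !rmorphM /= conjCK (psd_herm _ _ _ pY); ring.
Qed.

Lemma sf_sum {I : finType} (T : Type) (s : seq T) (P : pred T) (F : T -> op R I) u v :
  sf (fun i j => \sum_(x <- s | P x) F x i j) u v = \sum_(x <- s | P x) sf (F x) u v.
Proof.
rewrite /sf.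
transitivity (\sum_i \sum_(x <- s | P x) \sum_j (u i)^* * F x i j * v j).
  apply: eq_bigr => i _; rewrite exchange_big /=; apply: eq_bigr => j _.
  by rewrite mulr_sumr mulr_suml.
by rewrite exchange_big.
Qed.

Lemma sf_lin {I : finType} (a : C) (X Y : op R I) u v :
  sf (fun i j => a * X i j + Y i j) u v = a * sf X u v + sf Y u v.
Proof.
rewrite /sf mulr_sumr -big_split; apply: eq_bigr => i _.
rewrite mulr_sumr -big_split; apply: eq_bigr => j _ /=.
by ring.
Qed.

Lemma sf_gram1 {I : finType} (w : I -> C) v :
  sf (fun i j => w i * (w j)^*) v v =
  (\sum_j (w j)^* * v j)^* * (\sum_j (w j)^* * v j).
Proof.
rewrite /sf rmorph_sum mulr_suml; apply: eq_bigr => i _.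
rewrite mulr_sumr; apply: eq_bigr => j _.
by rewrite rmorphM /= ?conjCK; ring.
Qed.

Lemma psd_row0 {I : finType} (Y : op R I) i : psd Y -> Y i i = 0 -> forall j, Y i j = 0.
Proof.
move=> pY Yii j; apply/eqP/negPn/negP => nz.
set s := Y i j in nz.
have herm : Y j i = s^* by rewrite (psd_herm _ _ _ pY).
set c := s * s^*.
have c_gt0 : 0 < c by rewrite mul_conjC_gt0.
have Yjj := psd_diag _ j pY.
set u := (Y j j + 1) / (2 * c).
have u_ge0 : 0 <= u.
  by rewrite /u divr_ge0 // ?addr_ge0 ?ler01 // mulr_ge0 ?ler0n // ltW.
have := (pY (fun k => ev j k + (- u * s) * ev i k) : 0 <= sf Y _ _).
rewrite qf_expand !sf_ee Yii herm rmorphM rmorphN /= (geC0_conj u_ge0).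
have -> : Y j j + - u * s * s^* + - u * s^* * s + - u * s^* * (- u * s) * 0 = -1.
  rewrite /u /c; field; by rewrite nz conjC_eq0 nz.
by move=> H; move: (le_lt_trans H (ltrN10 _)); rewrite ltxx.
Qed.

Definition wvec {I : finType} (Y : op R I) (i0 : I) : I -> C :=
  fun j => if Y i0 i0 == 0 then 0 else Y j i0 / sqrtC (Y i0 i0).

Definition peel {I : finType} (Y : op R I) (i0 : I) : op R I :=
  fun i j => Y i j - wvec Y i0 i * (wvec Y i0 j)^*.

Lemma peel_psd {I : finType} (Y : op R I) i0 : psd Y -> psd (peel Y i0).
Proof.
move=> pY v; change (0 <= sf (peel Y i0) v v); rewrite /peel.
have -> : sf (fun i j => Y i j - wvec Y i0 i * (wvec Y i0 j)^*) v v =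
          sf Y v v - sf (fun i j => wvec Y i0 i * (wvec Y i0 j)^*) v v.
  have := sf_lin (-1) (fun i j => wvec Y i0 i * (wvec Y i0 j)^*) Y v v.
  rewrite (_ : (fun i j => -1 * (wvec Y i0 i * (wvec Y i0 j)^*) + Y i j) =
               (fun i j => Y i j - wvec Y i0 i * (wvec Y i0 j)^*)); last first.
    by apply/funext => i; apply/funext => j; ring.
  by move=> ->; ring.
rewrite sf_gram1.
rewrite /wvec; case: eqP => [d0|/eqP dn0].
  rewrite (eq_bigr (fun _ => 0)); last by move=> j _; rewrite rmorph0 mul0r.
  by rewrite big1 // rmorph0 mul0r subr0; apply: pY.
set d := Y i0 i0 in dn0 *.
have d_gt0 : 0 < d by rewrite lt_def dn0 psd_diag.
set r := sqrtC d.
have r_gt0 : 0 < r by rewrite sqrtC_gt0.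
have rr : r * r = d by rewrite -expr2 sqrtCK.
have rc : r^* = r by rewrite geC0_conj // ltW.
set s := sf Y (ev i0) v.
have z_eq : \sum_j (Y j i0 / r)^* * v j = s / r.
  rewrite /s sf_el mulr_suml; apply: eq_bigr => j _.
  rewrite rmorphM fmorphV /= -(psd_herm _ _ _ pY) rc; ring.
rewrite z_eq.
have sc : sf Y v (ev i0) = s^* by rewrite (sf_conj _ _ _ pY).
set t := - (s / d).
have := (pY (fun k => v k + t * ev i0 k) : 0 <= sf Y _ _).
rewrite qf_expand sc -/d.
have dc : d^* = d by rewrite geC0_conj // ltW.
have tc : t^* = - (s^* / d) by rewrite /t rmorphN rmorphM fmorphV /= dc.
rewrite tc -/s.
have -> : sf Y v v + t * s^* + - (s^* / d) * s + - (s^* / d) * t * d =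
          sf Y v v - (s / r)^* * (s / r).
  rewrite rmorphM fmorphV /= rc /t -rr; field; by rewrite gt_eqF.
by [].
Qed.

Lemma peel_diag0 {I : finType} (Y : op R I) i0 : psd Y -> peel Y i0 i0 i0 = 0.
Proof.
move=> pY; rewrite /peel /wvec; case: eqP => [->|/eqP dn0].
  by rewrite mul0r subr0.
have d_ge0 := psd_diag _ i0 pY.
have rc : (sqrtC (Y i0 i0))^* = sqrtC (Y i0 i0) by rewrite geC0_conj // sqrtC_ge0.
rewrite rmorphM fmorphV /= rc (geC0_conj d_ge0).
have rr : sqrtC (Y i0 i0) * sqrtC (Y i0 i0) = Y i0 i0 by rewrite -expr2 sqrtCK.
have rn0 : sqrtC (Y i0 i0) != 0 by rewrite sqrtC_eq0.
set r := sqrtC _ in rr rn0 *.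
rewrite -rr; field; exact: rn0.
Qed.

Lemma peel_diagi {I : finType} (Y : op R I) i0 i : psd Y -> Y i i = 0 -> peel Y i0 i i = 0.
Proof.
move=> pY Yii; rewrite /peel /wvec Yii (psd_row0 _ _ pY Yii i0).
by case: eqP => _; rewrite !mul0r subr0.
Qed.

Lemma psd_decomp_aux {I : finType} n : forall (S : {set I}) (Y : op R I),
  (#|S| <= n)%N -> psd Y -> (forall i, i \notin S -> Y i i = 0) ->
  exists ws : seq (I -> C), forall i j, Y i j = \sum_(w <- ws) w i * (w j)^*.
Proof.
have base : forall Y : op R I, psd Y -> (forall i, Y i i = 0) ->
    exists ws : seq (I -> C), forall i j, Y i j = \sum_(w <- ws) w i * (w j)^*.
  move=> Y pY Y0; exists [::] => i j; rewrite big_nil.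
  exact: psd_row0 _ _ pY (Y0 i) j.
elim: n => [|n IH] S Y cS pY Ys.
  apply: base => // i; apply: Ys.
  by move: cS; rewrite leqn0 cards_eq0 => /eqP ->; rewrite inE.
have [S0|/set0Pn [i0 i0S]] := eqVneq S finset.set0.
  by apply: base => // i; apply: Ys; rewrite S0 inE.
have c1 : (#|S :\ i0| <= n)%N.
  by move: cS; rewrite (cardsD1 i0) i0S.
have c2 : forall i, i \notin S :\ i0 -> peel Y i0 i i = 0.
  move=> i; rewrite !inE negb_and negbK => /orP [/eqP ->|iS].
    exact: peel_diag0.
  by apply: peel_diagi => //; apply: Ys.
have [ws Hws] := IH (S :\ i0) (peel Y i0) c1 (peel_psd _ i0 pY) c2.
exists (wvec Y i0 :: ws) => i j.
by rewrite big_cons -Hws /peel; ring.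
Qed.

Lemma psd_decomp {I : finType} (Y : op R I) : psd Y ->
  exists ws : seq (I -> C), forall i j, Y i j = \sum_(w <- ws) w i * (w j)^*.
Proof.
move=> pY; apply: (@psd_decomp_aux _ #|[set: I]| [set: I]) => // i.
by rewrite inE.
Qed.


Definition isgram {I : finType} (X : op R I) :=
  exists ws : seq (I -> C), forall i j, X i j = \sum_(w <- ws) w i * (w j)^*.

Lemma gram_psd {I : finType} (X : op R I) : isgram X -> psd X.
Proof.
move=> [ws Hws] v; change (0 <= sf X v v).
rewrite (_ : X = fun i j => \sum_(w <- ws) w i * (w j)^*); last first.
  by apply/funext => i; apply/funext => j.
rewrite sf_sum; apply: sumr_ge0 => w _.
by rewrite sf_gram1 mulrC mul_conjC_ge0.
Qed.

Lemma psd_isgram {I : finType} (X : op R I) : psd X -> isgram X.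
Proof. exact: psd_decomp. Qed.

Lemma isgram_ext {I : finType} {X Y : op R I} :
  isgram X -> (forall i j, X i j = Y i j) -> isgram Y.
Proof. by move=> [ws H] E; exists ws => i j; rewrite -E. Qed.

Lemma isgram_mul {I : finType} {X Y : op R I} :
  isgram X -> isgram Y -> isgram (fun i j => X i j * Y i j).
Proof.
move=> [ws1 H1] [ws2 H2].
exists [seq (fun i => w1 i * w2 i) | w1 <- ws1, w2 <- ws2] => i j.
rewrite H1 H2 big_allpairs_dep mulr_suml; apply: eq_bigr => w1 _.
rewrite mulr_sumr; apply: eq_bigr => w2 _.
by rewrite rmorphM /=; ring.
Qed.

Lemma isgram_pull {I J : finType} (f : J -> I) (X : op R I) :
  isgram X -> isgram (fun p q => X (f p) (f q)).
Proof.
move=> [ws H]; exists [seq (fun p => w (f p)) | w <- ws] => p q.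
by rewrite H big_map.
Qed.

Lemma isgram_tr {I : finType} (X : op R I) :
  isgram X -> isgram (fun i j => X j i).
Proof.
move=> [ws H]; exists [seq (fun i => (w i)^*) | w <- ws] => i j.
rewrite H big_map; apply: eq_bigr => w _; by rewrite conjCK mulrC.
Qed.

Lemma isgram_add {I : finType} {X Y : op R I} :
  isgram X -> isgram Y -> isgram (fun i j => X i j + Y i j).
Proof.
move=> [ws1 H1] [ws2 H2]; exists (ws1 ++ ws2) => i j.
by rewrite big_cat H1 H2.
Qed.

Lemma isgram0 {I : finType} : isgram (fun _ _ : I => (0 : C)).
Proof. by exists [::] => i j; rewrite big_nil. Qed.

Lemma isgram_one {I : finType} : isgram (fun _ _ : I => (1 : C)).
Proof.
by exists [:: fun _ => 1] => i j; rewrite big_cons big_nil addr0 rmorph1 mulr1.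
Qed.

Lemma isgram_sum {I : finType} (T : Type) (s : seq T) (P : pred T) (F : T -> op R I) :
  (forall x, P x -> isgram (F x)) -> isgram (fun i j => \sum_(x <- s | P x) F x i j).
Proof.
move=> H; elim: s => [|a s IH].
  by apply: (isgram_ext isgram0) => i j; rewrite big_nil.
case Pa: (P a).
  apply: (isgram_ext (isgram_add (H a Pa) IH)) => i j.
  by rewrite big_cons Pa.
by apply: (isgram_ext IH) => i j; rewrite big_cons Pa.
Qed.

Lemma isgram_prod {I : finType} (T : Type) (s : seq T) (P : pred T) (F : T -> op R I) :
  (forall x, P x -> isgram (F x)) -> isgram (fun i j => \prod_(x <- s | P x) F x i j).
Proof.
move=> H; elim: s => [|a s IH].
  by apply: (isgram_ext isgram_one) => i j; rewrite big_nil.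
case Pa: (P a).
  apply: (isgram_ext (isgram_mul (H a Pa) IH)) => i j.
  by rewrite big_cons Pa.
by apply: (isgram_ext IH) => i j; rewrite big_cons Pa.
Qed.

Lemma isgram_scale {I : finType} (c : C) (X : op R I) :
  0 <= c -> isgram X -> isgram (fun i j => c * X i j).
Proof.
move=> c0 [ws H]; exists [seq (fun i => sqrtC c * w i) | w <- ws] => i j.
rewrite H big_map mulr_sumr; apply: eq_bigr => w _.
have rc : (sqrtC c)^* = sqrtC c by rewrite geC0_conj // sqrtC_ge0.
rewrite rmorphM /= rc.
have cc : sqrtC c * sqrtC c = c by rewrite -expr2 sqrtCK.
by rewrite -{1}cc; ring.
Qed.


Lemma prod_ind_eq (k n : nat) (b b' : {ffun 'I_k -> 'I_n}) :
  \prod_j ((b j == b' j)%:R : C) = (b == b')%:R.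
Proof.
have [->|neq] := eqVneq b b'.
  by rewrite big1 // => j _; rewrite eqxx.
have [j0 Hj0] : exists j0, b j0 != b' j0.
  apply/existsP; apply: contraR neq => /existsPn H.
  by apply/eqP/ffunP => j; apply/eqP; move: (H j); rewrite negbK.
by rewrite (bigD1 j0) //= (negbTE Hj0) mul0r.
Qed.

Lemma sum_family_prod (k : nat) (P : 'I_k -> pred bool) (G : 'I_k -> bool -> C) :
  \sum_(y : {ffun 'I_k -> bool} | y \in family P) \prod_j G j (y j) =
  \prod_j \sum_(c | P j c) G j c.
Proof. by rewrite bigA_distr_big_dep. Qed.

Lemma sum_all_prod (k : nat) (G : 'I_k -> bool -> C) :
  \sum_(y : {ffun 'I_k -> bool}) \prod_j G j (y j) = \prod_j \sum_c G j c.
Proof. by rewrite bigA_distr_bigA. Qed.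

Lemma sum2_prod (k n : nat) (H : 'I_k -> 'I_n -> 'I_n -> C) :
  \sum_(b : {ffun 'I_k -> 'I_n}) \sum_(b' : {ffun 'I_k -> 'I_n}) \prod_j H j (b j) (b' j)
  = \prod_j \sum_c \sum_c' H j c c'.
Proof.
rewrite bigA_distr_bigA /=; apply: eq_bigr => b _.
by rewrite bigA_distr_bigA.
Qed.

End Psd.
Arguments isgram {R I}.
Arguments sf {R I}.
Arguments ev {R I}.
Arguments psd_isgram {R I X}.
Arguments gram_psd {R I X}.
Arguments isgram_ext {R I X Y}.
Arguments isgram_mul {R I X Y}.
Arguments isgram_pull {R I J} f {X}.
Arguments isgram_tr {R I X}.
Arguments isgram_add {R I X Y}.
Arguments isgram0 {R I}.
Arguments isgram_one {R I}.
Arguments isgram_sum {R I T} s P F.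
Arguments isgram_prod {R I T} s P F.
Arguments isgram_scale {R I c X}.
Arguments prod_ind_eq {R k n}.
Arguments sum_family_prod {R k}.
Arguments sum_all_prod {R k}.
Arguments sum2_prod {R k n}.
Arguments sum_evl {R I}.
Arguments sum_evr {R I}.

Section Construction.
Variable R : realType.
Local Notation C := (R[i]).
Variables (dA dB M k : nat) (N : chan R dA dB) (rho : 'I_M -> op R 'I_dA)
  (Lam : 'I_M -> op R 'I_dB).
Hypotheses (dB_gt0 : (0 < dB)%N) (M_gt0 : (0 < M)%N) (k_gt0 : (0 < k)%N)
  (hN : is_channel N) (hrho : forall x, is_state (rho x)) (hLam : is_povm Lam).

Definition Lop x (c : bool) : op R 'I_dB :=
  fun b b' => if c then @opI R _ b b' - Lam x b b' else Lam x b b'.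

Definition Qc (y : Yk k) : op R ('I_dA * Bk k dB)%type :=
  fun p q => M%:R^-1 * \sum_x rho x q.1 p.1 * \prod_j Lop x (y j) (p.2 j) (q.2 j).

Definition rhoA : op R 'I_dA := fun a a' => M%:R^-1 * \sum_x rho x a' a.

Lemma Lop_sum x b b' : \sum_(c : bool) Lop x c b b' = @opI R _ b b'.
Proof. by rewrite big_bool /Lop /=; ring. Qed.

Lemma Lop_gram x c : isgram (Lop x c).
Proof.
case: c; last exact: psd_isgram (hLam.1 x).
apply: (isgram_ext (isgram_sum (index_enum _) (fun x' => x' != x)
         (fun x' => Lam x') (fun x' _ => psd_isgram (hLam.1 x')))) => b b'.
by rewrite /Lop -(hLam.2 b b') [in RHS](bigD1 x) //= addrC addrK.
Qed.

Lemma trace1 x : \sum_a rho x a a = 1.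
Proof. exact: (hrho x).2. Qed.

Lemma M_ge0 : 0 <= (M%:R : C)^-1.
Proof. by rewrite invr_ge0 ler0n. Qed.

Lemma c1 (p q : 'I_dA * Bk k dB) :
  \sum_(y : Yk k) Qc y p q = rhoA p.1 q.1 * (p.2 == q.2)%:R.
Proof.
rewrite /Qc -mulr_sumr /rhoA -mulrA; congr (_ * _).
rewrite exchange_big mulr_suml; apply: eq_bigr => x _ /=.
rewrite -mulr_sumr; congr (_ * _).
rewrite (sum_all_prod (fun j c => Lop x c (p.2 j) (q.2 j))).
rewrite -prod_ind_eq; apply: eq_bigr => j _.
by rewrite Lop_sum.
Qed.

Lemma Qlike_gram (G : 'I_M -> 'I_k -> op R ('I_dA * Bk k dB)%type) :
  (forall x j, isgram (G x j)) ->
  isgram (fun p q => M%:R^-1 * \sum_x rho x q.1 p.1 * \prod_j G x j p q).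
Proof.
move=> HG.
have H : forall x, predT x -> isgram
   (fun (p q : 'I_dA * Bk k dB) => rho x q.1 p.1 * \prod_j G x j p q).
  move=> x _; apply: isgram_mul.
    exact: (isgram_pull fst (isgram_tr (psd_isgram (hrho x).1))).
  apply: (isgram_ext (isgram_prod (index_enum _) predT
     (fun j => G x j) (fun j _ => HG x j))).
  by [].
have H2 := isgram_scale M_ge0 (isgram_sum (index_enum _) predT _ H).
exact: (isgram_ext H2).
Qed.

Lemma Qc_gram y : isgram (Qc y).
Proof.
apply: (Qlike_gram (fun x j p q => Lop x (y j) (p.2 j) (q.2 j))) => x j.
exact: (isgram_pull (fun p : 'I_dA * Bk k dB => p.2 j) (Lop_gram x (y j))).
Qed.

Lemma ind_pair (a : 'I_dA) (b : Bk k dB) (l : 'I_dA * Bk k dB) :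
  ((a == l.1)%:R * (l.2 == b)%:R : C) = (l == (a, b))%:R.
Proof.
case: l => a' b' /=; rewrite xpair_eqE (eq_sym a).
by case: (a' == a); case: (b' == b); rewrite ?mul1r ?mul0r.
Qed.

Lemma Wconj (pi : {perm 'I_k}) (X : op R ('I_dA * Bk k dB)%type) p q :
  opmul (opmul (@WpermA R dA k dB pi) X) (opadj (@WpermA R dA k dB pi)) p q =
  X (p.1, [ffun j => p.2 (pi j)]) (q.1, [ffun j => q.2 (pi j)]).
Proof.
rewrite /opmul /opadj /WpermA /Wperm.
set P := (p.1, _); set Q := (q.1, _).
rewrite (eq_bigr (fun m => X P m * (m == Q)%:R)); first by rewrite sum_evr.
move=> m _; congr (_ * _).
  rewrite (eq_bigr (fun l => (l == P)%:R * X l m)); first by rewrite sum_evl.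
  by move=> l _; rewrite ind_pair.
by rewrite ind_pair rmorph_nat.
Qed.

Lemma c3 (pi : {perm 'I_k}) (y : Yk k) :
  opmul (opmul (@WpermA R dA k dB pi) (Qc (permy pi y))) (opadj (@WpermA R dA k dB pi))
  = Qc y.
Proof.
apply/funext => p; apply/funext => q; rewrite Wconj /Qc /=.
congr (_ * _); apply: eq_bigr => x _; congr (_ * _).
under eq_bigr do rewrite !ffunE.
symmetry; exact: (reindex_inj (F := fun j => Lop x (y j) (p.2 j) (q.2 j)) (@perm_inj _ pi)).
Qed.

Lemma c4 (i : nat) (y : Yk k) : psd (ptrans i (Qc y)).
Proof.
apply: gram_psd.
pose G := (fun x (j : 'I_k) (p q : 'I_dA * Bk k dB) =>
   if (j < i)%N then Lop x (y j) (q.2 j) (p.2 j) else Lop x (y j) (p.2 j) (q.2 j)).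
have HG : forall x j, isgram (G x j).
  move=> x j; have [h|h] := boolP (j < i)%N.
    apply: (isgram_ext (isgram_pull (fun p : 'I_dA * Bk k dB => p.2 j)
      (isgram_tr (Lop_gram x (y j))))) => p q.
    by rewrite /G h.
  apply: (isgram_ext (isgram_pull (fun p : 'I_dA * Bk k dB => p.2 j) (Lop_gram x (y j)))) => p q.
  by rewrite /G (negbTE h).
apply: (isgram_ext (Qlike_gram G HG)) => p q.
rewrite /ptrans /Qc /=; congr (_ * _); apply: eq_bigr => x _; congr (_ * _).
by apply: eq_bigr => j _; rewrite /G !ffunE; case: ifP.
Qed.

Definition j0 : 'I_k := Ordinal k_gt0.
Definition jl : 'I_k := Ordinal (eq_ind_r is_true k_gt0 (ltn_predL k)).

Lemma val_j0 (j : 'I_k) : (val j == 0%N) = (j == j0).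
Proof. by rewrite -(inj_eq val_inj). Qed.

Lemma val_jl (j : 'I_k) : (val j == k.-1) = (j == jl).
Proof. by rewrite -(inj_eq val_inj). Qed.

Lemma prod_ind_cond (n : nat) (P : pred 'I_k) (b b' : {ffun 'I_k -> 'I_n}) :
  \prod_(j | P j) ((b j == b' j)%:R : C) = ([forall j, P j ==> (b j == b' j)])%:R.
Proof.
have [H|] := boolP [forall j, P j ==> (b j == b' j)].
  by rewrite big1 // => j Pj; move/forallP: H => /(_ j); rewrite Pj /= => /eqP ->; rewrite eqxx.
rewrite negb_forall => /existsP [j]; rewrite negb_imply => /andP [Pj nb].
by rewrite (bigD1 j) //= (negbTE nb) mul0r.
Qed.

Lemma prod_split (j1 : 'I_k) (F G : 'I_k -> C) :
  \prod_j (if j == j1 then F j else G j) = F j1 * \prod_(j | j != j1) G j.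
Proof.
rewrite (bigD1 j1) //= eqxx; congr (_ * _).
by apply: eq_bigr => j /negbTE ->.
Qed.

Lemma sumQ_family (P : 'I_k -> pred bool) p q :
  \sum_(y : Yk k | y \in family P) Qc y p q =
  M%:R^-1 * \sum_x rho x q.1 p.1 * \prod_j \sum_(c | P j c) Lop x c (p.2 j) (q.2 j).
Proof.
rewrite /Qc -mulr_sumr; congr (_ * _).
rewrite exchange_big /=; apply: eq_bigr => x _.
rewrite -mulr_sumr; congr (_ * _).
exact: (sum_family_prod P (fun j c => Lop x c (p.2 j) (q.2 j))).
Qed.

Lemma trA_Qc (y : Yk k) b b' :
  trA (Qc y) b b' = M%:R^-1 * \sum_x \prod_j Lop x (y j) (b j) (b' j).
Proof.
rewrite /trA /Qc /= -mulr_sumr; congr (_ * _).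
rewrite exchange_big /=; apply: eq_bigr => x _.
by rewrite -mulr_suml trace1 mul1r.
Qed.

Lemma sumtrA_family (P : 'I_k -> pred bool) b b' :
  \sum_(y : Yk k | y \in family P) trA (Qc y) b b' =
  M%:R^-1 * \sum_x \prod_j \sum_(c | P j c) Lop x c (b j) (b' j).
Proof.
under eq_bigr do rewrite trA_Qc.
rewrite -mulr_sumr; congr (_ * _).
rewrite exchange_big /=; apply: eq_bigr => x _.
exact: (sum_family_prod P (fun j c => Lop x c (b j) (b' j))).
Qed.

Definition P0 (j : 'I_k) : pred bool := fun c => (j != j0) || ~~ c.

Lemma first0_fam (y : Yk k) : first0 y = (y \in family P0).
Proof.
apply/forallP/familyP => H j.
  by move: (H j); rewrite val_j0 /P0 unfold_in /=; case: (j == j0).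
by move: (H j); rewrite val_j0 /P0 unfold_in /=; case: (j == j0).
Qed.

Lemma sumP0 x (j : 'I_k) b b' :
  \sum_(c | P0 j c) Lop x c b b' = if j == j0 then Lam x b b' else @opI R _ b b'.
Proof.
rewrite big_mkcond big_bool /P0 /=.
by case: (j == j0) => /=; rewrite ?addr0 ?add0r // /Lop; ring.
Qed.

Lemma rC_inv : rC (M%:R^-1 : R) = (M%:R : C)^-1.
Proof. by rewrite /rC fmorphV rmorph_nat. Qed.

Lemma c5 : ople (fun b b' => \sum_(y : Yk k | first0 y) trA (Qc y) b b')
        (fun b b' => rC (M%:R^-1) * @opI R _ b b').
Proof.
have E : forall b b' : Bk k dB,
    \sum_(y : Yk k | first0 y) trA (Qc y) b b' = M%:R^-1 * @opI R _ b b'.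
  move=> b b'; rewrite (eq_bigl _ _ first0_fam) sumtrA_family; congr (_ * _).
  under eq_bigr do under eq_bigr do rewrite sumP0.
  under eq_bigr do rewrite prod_split.
  rewrite -mulr_suml (hLam.2 (b j0) (b' j0)) /opI -prod_ind_eq.
  rewrite [in RHS](bigD1 j0) //=.
apply: gram_psd; apply: (isgram_ext isgram0) => b b'.
by rewrite E rC_inv subrr.
Qed.

Definition Pl (y : Yk k) (j : 'I_k) : pred bool := fun c => (j == jl) || (c == y j).

Lemma abl_fam (y y' : Yk k) : agree_but_last y y' = (y' \in family (Pl y)).
Proof.
apply/forallP/familyP => H j.
  move: (H j); rewrite val_jl /Pl unfold_in /=; case: (j == jl) => //=.
  by rewrite eq_sym.
by move: (H j); rewrite val_jl /Pl unfold_in /=; case: (j == jl) => //=; rewrite eq_sym.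
Qed.

Lemma sumPl x y (j : 'I_k) b b' :
  \sum_(c | Pl y j c) Lop x c b b' = if j == jl then @opI R _ b b' else Lop x (y j) b b'.
Proof.
rewrite /Pl; case: (j == jl) => /=; first exact: Lop_sum.
exact: (big_pred1_eq _ (y j) (fun c => Lop x c b b')).
Qed.

Lemma eqlast_jl (b b' : Bk k dB) : eqlast b b' = (b jl == b' jl).
Proof.
apply/forallP/idP => [H|H j]; first by move: (H jl); rewrite val_jl eqxx.
by rewrite val_jl; apply/implyP => /eqP ->.
Qed.

Lemma c6 (y : Yk k) (b b' : Bk k dB) :
  \sum_(y' : Yk k | agree_but_last y y') trA (Qc y') b b' =
  (dB%:R)^-1 *
    (\sum_(y' : Yk k | agree_but_last y y')
       \sum_(a : 'I_dA) \sum_(c : 'I_dB) Qc y' (a, setlast b c) (a, setlast b' c))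
    * (eqlast b b')%:R.
Proof.
pose T x := \prod_(j | j != jl) Lop x (y j) (b j) (b' j).
have E1 : forall (b1 b1' : Bk k dB),
    \sum_(y' : Yk k | agree_but_last y y') trA (Qc y') b1 b1' =
    M%:R^-1 * \sum_x (@opI R _ (b1 jl) (b1' jl) * \prod_(j | j != jl) Lop x (y j) (b1 j) (b1' j)).
  move=> b1 b1'; rewrite (eq_bigl _ _ (abl_fam y)) sumtrA_family; congr (_ * _).
  apply: eq_bigr => x _.
  under eq_bigr do rewrite sumPl.
  by rewrite prod_split.
have E2 : \sum_(y' : Yk k | agree_but_last y y')
       \sum_(a : 'I_dA) \sum_(c : 'I_dB) Qc y' (a, setlast b c) (a, setlast b' c) =
    \sum_(c : 'I_dB) \sum_(y' : Yk k | agree_but_last y y') trA (Qc y') (setlast b c) (setlast b' c).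
  rewrite /trA; under eq_bigr do rewrite exchange_big /=.
  by rewrite exchange_big.
rewrite E2 E1 eqlast_jl.
under [in RHS]eq_bigr do rewrite E1.
have E3 : forall c x, @opI R _ ((setlast b c) jl) ((setlast b' c) jl) *
      \prod_(j | j != jl) Lop x (y j) ((setlast b c) j) ((setlast b' c) j) = T x.
  move=> c x; rewrite /setlast !ffunE val_jl eqxx /opI eqxx mul1r.
  by apply: eq_bigr => j /negbTE nj; rewrite !ffunE val_jl nj.
under [in RHS]eq_bigr do under eq_bigr do rewrite E3.
rewrite sumr_const card_ord.
have dBn0 : (dB%:R : C) != 0 by rewrite pnatr_eq0 -lt0n.
rewrite /opI.
have -> : \sum_x ((b jl == b' jl)%:R * \prod_(j | j != jl) Lop x (y j) (b j) (b' j)) =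
          (b jl == b' jl)%:R * \sum_x T x by rewrite mulr_sumr.
rewrite -mulr_natr; field; by rewrite dBn0 pnatr_eq0 -lt0n M_gt0.
Qed.

Lemma hlin : is_linear_map N. Proof. by case: hN. Qed.

Lemma N0 : N (fun _ _ => 0) = (fun _ _ => 0).
Proof.
have H := (hlin (-1) (fun _ _ => 0) (fun _ _ => 0)).
have e : (fun i j : 'I_dA => -1 * (0 : C) + 0) = (fun _ _ => 0).
  by apply/funext => i; apply/funext => j; ring.
rewrite e in H; apply/funext => i; apply/funext => j.
by rewrite H; ring.
Qed.

Lemma N_scale (c : C) (X : op R 'I_dA) :
  N (fun i j => c * X i j) = (fun i j => c * N X i j).
Proof.
have H := (hlin c X (fun _ _ => 0)).
have e : (fun i j : 'I_dA => c * X i j + 0) = (fun i j => c * X i j).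
  by apply/funext => i; apply/funext => j; ring.
rewrite e N0 in H; rewrite H; apply/funext => i; apply/funext => j; ring.
Qed.

Lemma N_add (X Y : op R 'I_dA) :
  N (fun i j => X i j + Y i j) = (fun i j => N X i j + N Y i j).
Proof.
have H := (hlin 1 X Y).
have e : (fun i j : 'I_dA => 1 * X i j + Y i j) = (fun i j => X i j + Y i j).
  by apply/funext => i; apply/funext => j; ring.
rewrite e in H; rewrite H; apply/funext => i; apply/funext => j; ring.
Qed.

Lemma N_sum (T : Type) (s : seq T) (E : T -> op R 'I_dA) :
  N (fun i j => \sum_(t <- s) E t i j) = (fun i j => \sum_(t <- s) N (E t) i j).
Proof.
elim: s => [|t s IH].
  have e : (fun i j : 'I_dA => \sum_(t <- [::]) E t i j) = (fun _ _ => 0).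
    by apply/funext => i; apply/funext => j; rewrite big_nil.
  rewrite e N0; apply/funext => i; apply/funext => j; by rewrite big_nil.
have e : (fun i j : 'I_dA => \sum_(t0 <- t :: s) E t0 i j) =
         (fun i j => E t i j + \sum_(t0 <- s) E t0 i j).
  by apply/funext => i; apply/funext => j; rewrite big_cons.
rewrite e N_add IH; apply/funext => i; apply/funext => j; by rewrite big_cons.
Qed.

Lemma Nrho x (c' c : 'I_dB) :
  N (rho x) c' c = \sum_a \sum_a' rho x a' a * choi N (a', c') (a, c).
Proof.
have E : rho x = fun i j => \sum_(a : 'I_dA) \sum_(a' : 'I_dA)
                    rho x a' a * ((i == a') && (j == a))%:R.
  apply/funext => i; apply/funext => j; symmetry.
  transitivity (\sum_(a : 'I_dA) (\sum_(a' : 'I_dA) rho x a' a * (a' == i)%:R) * (a == j)%:R).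
    apply: eq_bigr => a _; rewrite mulr_suml; apply: eq_bigr => a' _.
    by rewrite (eq_sym i) (eq_sym j); case: (a' == i); case: (a == j); rewrite /= ?mulr0 ?mulr1.
  by under eq_bigr do rewrite sum_evr; rewrite sum_evr.
rewrite {1}E.
rewrite (N_sum _ _ (fun a i j => \sum_(a' : 'I_dA) rho x a' a * ((i == a') && (j == a))%:R)).
apply: eq_bigr => a _.
rewrite (N_sum _ _ (fun a' i j => rho x a' a * ((i == a') && (j == a))%:R)).
apply: eq_bigr => a' _.
by rewrite (N_scale (rho x a' a) (fun i j => ((i == a') && (j == a))%:R)).
Qed.

Lemma exch4 (I1 I2 I3 I4 : finType) (F : I1 -> I2 -> I3 -> I4 -> C) :
  \sum_i1 \sum_i2 \sum_i3 \sum_i4 F i1 i2 i3 i4 =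
  \sum_i3 \sum_i4 \sum_i1 \sum_i2 F i1 i2 i3 i4.
Proof.
rewrite pair_bigA; under eq_bigr do rewrite pair_bigA.
rewrite exchange_big /=.
rewrite [RHS]pair_bigA; under [RHS]eq_bigr do rewrite pair_bigA.
by [].
Qed.

Lemma sum_pair (I J : finType) (G : I * J -> C) :
  \sum_p G p = \sum_i \sum_j G (i, j).
Proof. by rewrite pair_bigA; apply: eq_bigr => -[]. Qed.

Lemma CE_eq (l p : 'I_dA * Bk k dB) :
  @choi_ext R dA dB k N l p =
  choi N (l.1, l.2 j0) (p.1, p.2 j0) * \prod_(j | j != j0) ((l.2 j == p.2 j)%:R).
Proof.
rewrite /choi_ext (eq_bigl _ _ val_j0) big_pred1_eq; congr (_ * _).
rewrite prod_ind_cond; congr (_%:R).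
Qed.

Lemma sumQ0 (p l : 'I_dA * Bk k dB) :
  \sum_(y : Yk k | first0 y) Qc y p l =
  M%:R^-1 * \sum_x rho x l.1 p.1 *
    (Lam x (p.2 j0) (l.2 j0) * \prod_(j | j != j0) @opI R _ (p.2 j) (l.2 j)).
Proof.
rewrite (eq_bigl _ _ first0_fam) sumQ_family; congr (_ * _).
apply: eq_bigr => x _; congr (_ * _).
under eq_bigr do rewrite sumP0.
by rewrite prod_split.
Qed.

Definition H x (a a' : 'I_dA) (j : 'I_k) (c c' : 'I_dB) : C :=
  if j == j0 then Lam x c c' * choi N (a', c') (a, c)
  else @opI R _ c c' * (c' == c)%:R.

Lemma pointwise (p l : 'I_dA * Bk k dB) :
  (\sum_(y : Yk k | first0 y) Qc y p l) * @choi_ext R dA dB k N l p =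
  M%:R^-1 * \sum_x rho x l.1 p.1 * \prod_j H x p.1 l.1 j (p.2 j) (l.2 j).
Proof.
rewrite sumQ0 CE_eq -mulrA; congr (_ * _); rewrite mulr_suml.
apply: eq_bigr => x _; rewrite /H prod_split big_split /=.
ring.
Qed.

Lemma sumH x a a' :
  \sum_(b : {ffun 'I_k -> 'I_dB}) \sum_(b' : {ffun 'I_k -> 'I_dB})
     \prod_j H x a a' j (b j) (b' j) =
  (\sum_c \sum_c' Lam x c c' * choi N (a', c') (a, c)) * (dB%:R) ^+ k.-1.
Proof.
rewrite sum2_prod.
rewrite (eq_bigr (fun j => if j == j0 then
     \sum_c \sum_c' Lam x c c' * choi N (a', c') (a, c) else dB%:R)); last first.
  move=> j _; rewrite /H; case: (j == j0) => //.
  rewrite (eq_bigr (fun _ => 1)); first by rewrite sumr_const card_ord.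
  move=> c _; rewrite (bigD1 c) //= eqxx /opI eqxx !mulr1 big1 ?addr0 //.
  by move=> c' nc; rewrite eq_sym (negbTE nc) mul0r.
rewrite prod_split; congr (_ * _).
have := prodr_const (predC1 j0) (dB%:R : C); rewrite cardC1 card_ord => <-.
by apply: eq_bigl => j; rewrite inE.
Qed.

Lemma inner_sum (a a' : 'I_dA) :
  \sum_(b : Bk k dB) \sum_(b' : Bk k dB)
     M%:R^-1 * \sum_x rho x a' a * \prod_j H x a a' j (b j) (b' j) =
  M%:R^-1 * \sum_x rho x a' a *
     ((\sum_c \sum_c' Lam x c c' * choi N (a', c') (a, c)) * (dB%:R) ^+ k.-1).
Proof.
under eq_bigr do rewrite -mulr_sumr; rewrite -mulr_sumr; congr (_ * _).
under eq_bigr do rewrite exchange_big /=.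
rewrite exchange_big /=.
apply: eq_bigr => x _; rewrite -sumH mulr_sumr; apply: eq_bigr => b _.
by rewrite mulr_sumr.
Qed.

Lemma c7sum :
  \sum_(y : Yk k | first0 y) optr (opmul (Qc y) (@choi_ext R dA dB k N)) =
  (dB%:R) ^+ k.-1 * (M%:R^-1 * \sum_x optr (opmul (Lam x) (N (rho x)))).
Proof.
rewrite /optr /opmul.
transitivity (\sum_(p : 'I_dA * Bk k dB) \sum_(l : 'I_dA * Bk k dB)
    (\sum_(y : Yk k | first0 y) Qc y p l) * @choi_ext R dA dB k N l p).
  rewrite exchange_big; apply: eq_bigr => p _.
  rewrite exchange_big; apply: eq_bigr => l _.
  by rewrite mulr_suml.
under eq_bigr do under eq_bigr do rewrite pointwise.
rewrite sum_pair; under eq_bigr do under eq_bigr do rewrite sum_pair.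
under eq_bigr do rewrite exchange_big /=.
under eq_bigr do under eq_bigr do rewrite inner_sum.
pose F x (a a' : 'I_dA) (c c' : 'I_dB) := rho x a' a * (Lam x c c' * choi N (a', c') (a, c)).
transitivity ((dB%:R) ^+ k.-1 * (M%:R^-1 *
    \sum_x \sum_(a : 'I_dA) \sum_(a' : 'I_dA) \sum_c \sum_c' F x a a' c c')).
  set D := (dB%:R : C) ^+ k.-1.
  transitivity (\sum_(a : 'I_dA) \sum_(a' : 'I_dA) (D * M%:R^-1) *
                 \sum_x \sum_c \sum_c' F x a a' c c').
    apply: eq_bigr => a _; apply: eq_bigr => a' _.
    rewrite (mulrC D) -mulrA; congr (_ * _); rewrite mulr_sumr; apply: eq_bigr => x _.
    rewrite mulrA mulrC; congr (D * _); rewrite mulr_sumr; apply: eq_bigr => c _.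
    by rewrite mulr_sumr.
  rewrite mulrA; under eq_bigr do rewrite -mulr_sumr; rewrite -mulr_sumr; congr (_ * _).
  under eq_bigr do rewrite exchange_big /=.
  by rewrite exchange_big.
congr (_ * (_ * _)); apply: eq_bigr => x _.
rewrite exch4; apply: eq_bigr => c _; apply: eq_bigr => c' _.
rewrite Nrho mulr_sumr; apply: eq_bigr => a _.
rewrite mulr_sumr; apply: eq_bigr => a' _.
by rewrite /F; ring.
Qed.

Lemma Nrho_psd x : psd (N (rho x)).
Proof.
have hcp : completely_positive N by case: hN.
have X1 : psd (fun (p q : 'I_1 * 'I_dA) => rho x p.2 q.2).
  exact: gram_psd (isgram_pull snd (psd_isgram (hrho x).1)).
have := hcp 1%N _ X1 => /psd_isgram G.
apply: gram_psd.
exact: (isgram_pull (fun b : 'I_dB => ((ord0 : 'I_1), b)) G).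
Qed.

Definition tau x : C := optr (opmul (Lam x) (N (rho x))).

Lemma tau_conj x : (tau x)^* = tau x.
Proof.
rewrite /tau /optr /opmul rmorph_sum exchange_big /=; apply: eq_bigr => l _.
rewrite rmorph_sum; apply: eq_bigr => i _.
rewrite rmorphM /= -(psd_herm _ _ _ _ (hLam.1 x)) -(psd_herm _ _ _ _ (Nrho_psd x)).
by rewrite mulrC.
Qed.

Lemma tau_Im x : complex.Im (tau x) = 0.
Proof.
have : tau x \is Num.real by apply/CrealP; exact: tau_conj.
rewrite realE => /orP [] /=; rewrite lecE /= => /andP [/eqP H _] //.
Qed.

Lemma sum_tr_povm (Y : op R 'I_dB) :
  \sum_x optr (opmul (Lam x) Y) = optr Y.
Proof.
rewrite /optr /opmul exchange_big /=; apply: eq_bigr => i _.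
rewrite exchange_big /=.
rewrite (eq_bigr (fun l => (l == i)%:R * Y l i)); first by rewrite sum_evl.
move=> l _; rewrite -mulr_suml (hLam.2 i l) /opI eq_sym //.
Qed.

Lemma tau_ge (eps : R) x (hperr : perr N rho Lam <= eps) : 1 - eps <= complex.Re (tau x).
Proof.
have h1 : \sum_(xh | xh != x) optr (opmul (Lam xh) (N (rho x))) = 1 - tau x.
  have := sum_tr_povm (N (rho x)).
  have tp : trace_preserving N by case: hN.
  rewrite tp (hrho x).2 (bigD1 x) //= => <-; rewrite /tau; ring.
have h2 : complex.Re (1 - tau x) <= eps.
  apply: le_trans hperr; rewrite /perr -h1.
  exact: (le_bigmax 0 (fun x0 => complex.Re (\sum_(xh | xh != x0)
         optr (opmul (Lam xh) (N (rho x0))))) x).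
move: h2; rewrite raddfB /= => h2.
lra.
Qed.

Lemma c7 (eps : R) (hperr : perr N rho Lam <= eps) :
  rC (1 - eps) <= ((dB%:R) ^+ (k.-1))^-1 *
     \sum_(y : Yk k | first0 y) optr (opmul (Qc y) (@choi_ext R dA dB k N)).
Proof.
have Dn0 : ((dB%:R : C) ^+ k.-1) != 0 by rewrite expf_neq0 // pnatr_eq0 -lt0n.
rewrite c7sum mulKf //.
have Etau : forall x, tau x = rC (complex.Re (tau x)).
  by move=> x; rewrite {1}[tau x]complexE tau_Im /rC rmorph0 mulr0 addr0.
rewrite (eq_bigr (fun x => rC (complex.Re (tau x)))); last by move=> x _; rewrite -Etau.
rewrite /rC -rmorph_sum.
have -> : (M%:R : C)^-1 = rC ((M%:R : R)^-1) by rewrite /rC fmorphV rmorph_nat.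
rewrite /rC -rmorphM lecR.
have hM : (0 < (M%:R : R)) by rewrite ltr0n.
rewrite ler_pdivlMl //.
have : \sum_(x < M) (1 - eps) <= \sum_(x < M) complex.Re (tau x).
  by apply: ler_sum => x _; exact: tau_ge.
rewrite sumr_const card_ord => H.
apply: le_trans H; by rewrite mulr_natl.
Qed.

Lemma rhoA_state : is_state rhoA.
Proof.
split.
  apply: gram_psd.
  have H : forall x, predT x -> isgram (fun a a' : 'I_dA => rho x a' a).
    by move=> x _; exact: isgram_tr (psd_isgram (hrho x).1).
  exact: (isgram_ext (isgram_scale M_ge0 (isgram_sum (index_enum _) predT _ H))).
rewrite /optr /rhoA -mulr_sumr exchange_big /=.
rewrite (eq_bigr (fun _ => 1)); last by move=> x _; exact: trace1.
by rewrite sumr_const card_ord mulVf // pnatr_eq0 -lt0n.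
Qed.

Lemma feasible (eps : R) (hperr : perr N rho Lam <= eps) :
  sdp_feasible N eps (M%:R^-1) rhoA Qc.
Proof.
split; first exact: c1.
split; first by move=> y; exact: gram_psd (Qc_gram y).
split; first exact: c3.
split; first by move=> i y _; exact: c4.
split; first by exact: c5.
split; first exact: c6.
exact: c7.
Qed.

End Construction.

Theorem theorem1 (R : realType) (dA dB : nat) (N : chan R dA dB) (eps : R)
    (k : nat) :
  (0 < dA)%N -> (0 < dB)%N -> is_channel N -> 0 <= eps <= 1 -> (1 <= k)%N ->
  (one_shot_capacity N eps <= - elog2 (sdp_inf N eps k))%E.
Proof.
move=> dA_gt0 dB_gt0 hN heps k_gt0.
apply: ge_ereal_sup => e [M [rho [Lam [M_gt0 hrho hLam hperr ->]]]].
have Hf := @feasible R dA dB M k N rho Lam dB_gt0 M_gt0 k_gt0 hN hrho hLam eps hperr.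
have Hs := @rhoA_state R dA M rho M_gt0 hrho.
have Hinf : (sdp_inf N eps k <= ((M%:R : R)^-1)%:E)%E.
  apply: ereal_inf_lbound.
  exists (M%:R^-1), (rhoA R dA M rho), (Qc R dA dB M k rho Lam).
  by split => //; rewrite invr_ge0 ler0n.
have hM : (0 < (M%:R : R)) by rewrite ltr0n.
move: Hinf; case: (sdp_inf N eps k) => [r||] //= Hr.
  case: ifP => r_gt0; last by rewrite leey.
  rewrite lee_fin in Hr; rewrite lee_fin /log2.
  have ln2 : (0 < ln (2 : R)) by apply: ln_gt0; rewrite ltr1n.
  rewrite -mulNr ler_pM2r ?invr_gt0 //.
  have : ln r <= ln ((M%:R : R)^-1).
    by rewrite ler_ln // posrE ?invr_gt0.
  rewrite lnV ?posrE //; lra.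
by rewrite leey.
Qed.
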